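(* Let $F=\{F^{(1)},\ldots,F^{(k)}\}$ be an SNRE of degree $(d,k)$. There exists an algorithm which, given $F$ (i.e. the coefficients of the polynomials $F^{(1)},\ldots,F^{(k)}$), determines the set $\mathcal{E}(F)$ of essential symbols and the set $\mathcal{I}(F)$ of inessential symbols, and this algorithm halts within $k$ steps.
   Context: An SNRE of degree $(d,k)$ consists of $k$ nonzero homogeneous polynomials $F^{(1)},\ldots,F^{(k)}$ of degree $d$ in $k$ variables $x_1,\dots,x_k$ with nonnegative integer coefficients, together with the sequences defined by $\gamma_{i;0}=1$ and $\gamma_{i;n}=F^{(i)}(\gamma_{1;n-1},\ldots,\gamma_{k;n-1})$ for $n\ge1$ (the symbols are $1,\dots,k$). Symbol $i$ induces $j$ ($i\to j$) if $x_j$ occurs in some monomial of $F^{(i)}$ with nonzero coefficient. A symbol $i$ is essential if $\gamma_{i;n}\ge 2$ for some $n\in\mathbb{N}$ and inessential otherwise (i.e. $\gamma_{i;n}=1$ for all $n$); $\mathcal{E}(F)$ and $\mathcal{I}(F)$ denote the sets of essential and inessential symbols. *)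

(* Defs.v *)
From HB Require Import structures.
From mathcomp Require Import all_boot all_order all_algebra.
From mathcomp Require Import mpoly.
Set Implicit Arguments. Unset Strict Implicit. Unset Printing Implicit Defensive.
Import Order.TTheory GRing.Theory Num.Theory.
Local Open Scope ring_scope.

Definition is_SNRE (d k : nat) (F : 'I_k -> {mpoly int[k]}) : Prop :=
  forall i : 'I_k,
    [/\ F i != 0, F i \is d.-homog & forall m : 'X_{1..k}, 0 <= (F i)@_m].

Fixpoint gamma (k : nat) (F : 'I_k -> {mpoly int[k]}) (n : nat) : 'I_k -> int :=
  match n with
  | 0%N => fun _ => 1
  | n'.+1 => fun i => (F i).@[gamma F n']
  end.

Definition essential (k : nat) (F : 'I_k -> {mpoly int[k]}) (i : 'I_k) : Prop :=
  exists n : nat, 2 <= gamma F n i.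

Definition inessential (k : nat) (F : 'I_k -> {mpoly int[k]}) (i : 'I_k) : Prop :=
  forall n : nat, gamma F n i = 1.

(* Main.v *)
Require Import Defs.
From mathcomp Require Import all_boot all_order all_algebra.
From mathcomp Require Import mpoly zify.
Import Order.TTheory GRing.Theory Num.Theory.
Local Open Scope ring_scope.

Lemma int_mul_eq1 (a b : int) : 1 <= a -> 1 <= b -> a * b = 1 -> a = 1 /\ b = 1.
Proof. nia. Qed.
Lemma int_contra (a b S : int) : 1 <= a -> 1 <= b -> 0 <= S -> a + (b + S) = 1 -> False.
Proof. lia. Qed.

Section Aux.
Variable k : nat.
Implicit Types (x y : 'I_k -> int) (p : {mpoly int[k]}) (m : 'X_{1..k}).

Local Notation PM x m := (\prod_i x i ^+ m i : int).

Lemma PM_ge1 x m : (forall i, 1 <= x i) -> 1 <= PM x m.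
Proof.
move=> hx; elim/big_ind: _ => //.
  by move=> a b ha hb; rewrite -[1]mulr1; apply: ler_pM.
by move=> i _; apply: exprn_ege1.
Qed.

Lemma PM_mono x y m : (forall i, 0 <= x i <= y i) -> PM x m <= PM y m.
Proof.
move=> h; apply: ler_prod => i _.
have /andP[h0 h1] := h i.
by rewrite exprn_ge0 //= lerXn2r // ?nnegrE // (le_trans h0 h1).
Qed.

Lemma PM_eq1 x m : (forall i, 1 <= x i) -> PM x m = 1 ->
  forall i, (0 < m i)%N -> x i = 1.
Proof.
move=> hx hP i hm; have hx1 := hx i.
suff : x i <= PM x m by rewrite hP; lia.
  rewrite (bigD1 i) //=.
  have h1 : x i <= x i ^+ m i by apply: ler_eXnr; rewrite // hx.
  have h2 : 1 <= \prod_(j | j != i) x j ^+ m j.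
    elim/big_ind: _ => //.
      by move=> a b ha hb; rewrite -[1]mulr1; apply: ler_pM.
    by move=> j _; apply: exprn_ege1.
  apply: (le_trans h1); rewrite -[X in X <= _]mulr1; apply: ler_pM => //.
  by rewrite exprn_ge0 // (le_trans ler01 hx1).
Qed.

Lemma PM_1 y m : (forall i, (0 < m i)%N -> y i = 1) -> PM y m = 1.
Proof.
move=> h; rewrite big1 // => i _.
case: (posnP (m i)) => [->|/h ->]; by rewrite ?expr0 ?expr1n.
Qed.

Definition nonneg p := forall m, 0 <= p@_m.

Lemma coef_ge1 p m : nonneg p -> m \in msupp p -> 1 <= p@_m.
Proof.
move=> hp; rewrite mcoeff_msupp => hm; have := hp m; move: hm; lia.
Qed.

Lemma ev_mono p x y : nonneg p -> (forall i, 0 <= x i <= y i) -> p.@[x] <= p.@[y].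
Proof.
move=> hp h; rewrite !mevalE; apply: ler_sum => m _.
apply: ler_wpM2l => //; exact: PM_mono.
Qed.

Lemma sum_ge p x s : nonneg p -> (forall i, 1 <= x i) ->
  0 <= \sum_(m <- s) p@_m * PM x m.
Proof.
move=> hp hx; apply: sumr_ge0 => m _; apply: mulr_ge0 => //.
exact: le_trans ler01 (PM_ge1 _ m hx).
Qed.

Lemma ev_ge1 p x : p != 0 -> nonneg p -> (forall i, 1 <= x i) -> 1 <= p.@[x].
Proof.
move=> p0 hp hx; rewrite mevalE.
have hm : forall m, m \in msupp p -> 1 <= p@_m := fun m => coef_ge1 p m hp.
case E: (msupp p) hm => [|m s] hm.
  by move/eqP: E; rewrite msupp_eq0 (negbTE p0).
rewrite big_cons.
have h1 : 1 <= p@_m * PM x m.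
  rewrite -[1]mulr1; apply: ler_pM => //; [exact: hm (mem_head _ _)|exact: PM_ge1].
have h2 := sum_ge _ _ s hp hx. by apply: (le_trans h1); rewrite lerDl.
Qed.

Lemma ev_eq1 p x y : nonneg p -> (forall i, 1 <= x i) -> (forall i, 1 <= y i) ->
  (forall j, x j = 1 -> y j = 1) -> p.@[x] = 1 -> p.@[y] = 1.
Proof.
move=> hp hx hy hxy; rewrite !mevalE.
have hm : forall m, m \in msupp p -> 1 <= p@_m := fun m => coef_ge1 p m hp.
case E: (msupp p) hm => [|m s] hm; first by rewrite big_nil.
rewrite !big_cons.
have c1 : 1 <= p@_m by exact: hm (mem_head _ _).
have P1 := PM_ge1 _ m hx.
case: s E hm => [|m' s] E hm.
  rewrite !big_nil !addr0 => hev.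
  have [hc hP] := int_mul_eq1 _ _ c1 P1 hev.
  rewrite hc mul1r; apply: (PM_1 y) => i /(PM_eq1 _ _ hx hP i); exact: hxy.
rewrite big_cons => hev; exfalso.
have c2 : 1 <= p@_m' by apply: hm; rewrite !inE eqxx orbT.
have P2 := PM_ge1 _ m' hx.
have h3 := sum_ge _ _ s hp hx.
have h4 : 1 <= p@_m * PM x m by rewrite -[1]mulr1; apply: ler_pM.
have h5 : 1 <= p@_m' * PM x m' by rewrite -[1]mulr1; apply: ler_pM.
exact: (int_contra _ _ _ h4 h5 h3 hev).
Qed.
End Aux.

Section Main.
Variables (d k : nat) (F : 'I_k -> {mpoly int[k]}).
Hypothesis hF : is_SNRE d F.

Lemma hnn i : @nonneg k (F i).
Proof. by have [_ _ h] := hF i. Qed.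

Lemma g_ge1 n i : 1 <= gamma F n i.
Proof.
elim: n i => [|n IH] i //=.
have [h0 _ _] := hF i.
exact: (@ev_ge1 _ _ _ h0 (hnn i) IH).
Qed.

Lemma g_mono n i : gamma F n i <= gamma F n.+1 i.
Proof.
elim: n i => [|n IH] i; first exact: g_ge1 1%N i.
rewrite [gamma F n.+2 i]/= [gamma F n.+1 i]/=.
apply: (@ev_mono _ _ _ _ (hnn i)) => j; rewrite IH andbT.
exact: le_trans ler01 (g_ge1 n j).
Qed.

Definition T n := [set i | gamma F n i != 1].

Lemma inT n i : (i \in T n) = (2 <= gamma F n i).
Proof. rewrite inE; have := g_ge1 n i; lia. Qed.

Lemma T_sub n : T n \subset T n.+1.
Proof.
apply/subsetP => i; rewrite !inT => h; exact: le_trans h (g_mono n i).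
Qed.

Lemma T_step n : T n = T n.+1 -> T n.+1 = T n.+2.
Proof.
move=> E; apply/eqP; rewrite eqEsubset T_sub /=.
apply/subsetP => i; rewrite !inE; apply: contra => /eqP h1; apply/eqP.
rewrite [gamma F n.+2 i]/=.
apply: (@ev_eq1 _ _ _ _ (hnn i) (g_ge1 n) (g_ge1 n.+1)) => // j hj.
have : j \notin T n by rewrite inE hj eqxx.
by rewrite E inE negbK => /eqP.
Qed.

Lemma T_stab n : T n = T n.+1 -> forall m, T (n + m) = T n.
Proof.
move=> E.
have aux : forall m, T (n + m) = T (n + m).+1.
  elim=> [|m IH]; first by rewrite addn0.
  by rewrite addnS; apply: T_step.
elim=> [|m IH]; first by rewrite addn0.
by rewrite addnS -aux.
Qed.

Lemma T_final m : (k <= m)%N -> T m \subset T k.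
Proof.
move=> km.
case: (boolP [exists j : 'I_k, T j == T j.+1]).
  case/existsP => j /eqP E.
  have jk : (j <= k)%N by apply: ltnW.
  have jm : (j <= m)%N by apply: leq_trans jk km.
  have h1 : T m = T j by have := T_stab j E (m - j); rewrite subnKC.
  have h2 : T k = T j by have := T_stab j E (k - j); rewrite subnKC.
  by rewrite h1 h2.
move=> nonex.
have hall : forall n, (n <= k)%N -> (n <= #|T n|)%N.
  elim=> [|n IH] hn //.
  have hn' : (n < k)%N := hn.
  have : T n != T n.+1.
    apply: contra nonex => /eqP E; apply/existsP; exists (Ordinal hn'); exact/eqP.
  move=> ne; have hp : T n \proper T n.+1 by rewrite properEneq ne T_sub.
  have := proper_card hp; have := IH (ltnW hn); lia.
have -> : T k = setT.
  apply/eqP; rewrite eqEcard subsetT cardsT card_ord; exact: hall.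
exact: subsetT.
Qed.

End Main.

Theorem theorem2 (d k : nat) (F : 'I_k -> {mpoly int[k]}) :
  is_SNRE d F ->
  forall i : 'I_k,
    (essential F i <-> exists2 n : nat, (n <= k)%N & 2 <= gamma F n i) /\
    (inessential F i <-> forall n : nat, (n <= k)%N -> gamma F n i = 1).
Proof.
move=> hF i; split; split.
- case=> n hn; case: (leqP n k) => nk; first by exists n.
  exists k => //; rewrite -(@inT _ _ _ hF); apply: (subsetP (@T_final _ _ _ hF _ (ltnW nk))).
  by rewrite (@inT _ _ _ hF).
- by case=> n _ hn; exists n.
- by move=> h n _; exact: h.
- move=> h n; case: (leqP n k) => nk; first exact: h.
  have hk := h k (leqnn k).
  have : i \notin @T k F k by rewrite inE hk eqxx.
  move/(contra (subsetP (@T_final _ _ _ hF _ (ltnW nk)) i)).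
  by rewrite inE negbK => /eqP.
Qed.
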